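(* Let $M$ be an ACI-matrix over a field $\mathbb{F}$ and let $F_1,F_2$ be two overlapping (i.e. $F_1\cap F_2\neq\emptyset$) factor sets (resp. semifactor sets) of $M$. Then $F_1\cap F_2$ and $F_1\cup F_2$ are factor sets (resp. semifactor sets) of $M$.
   Context: Let $\mathbb{F}$ be a field. An ACI-matrix is a matrix with entries in $\mathbb{F}[x_1,\dots,x_k]$ whose entries are polynomials of degree at most one and such that no indeterminate appears in two different columns. A completion is an assignment of values in $\mathbb{F}$ to all indeterminates; $\mathrm{maxRank}(N)$ is the maximum rank of a completion. ACI-matrices (and blocks) of size $0\times q$ ($q>0$, wide degenerate), $p\times 0$ ($p>0$, tall degenerate) and $0\times0$ (void) are allowed. $N$ is FRmR if $\mathrm{maxRank}(N)=\mathrm{rows}(N)$, FCmR if $\mathrm{maxRank}(N)=\mathrm{cols}(N)$; by convention tall degenerate is FRmR, wide degenerate is FCmR, void is both. For an $m\times n$ block matrix $\begin{bmatrix} A & B\\ 0 & C\end{bmatrix}$ with lower-left $r\times s$ zero block, the zero block is Big if $r+s>\max\{m,n\}$, Medium if $r+s=\max\{m,n\}$. For $F=\{f_1<\dots<f_s\}\subseteq\{1,\dots,n\}$ with complement $\{g_1<\dots<g_{n-s}\}$, $Q_F$ is the $n\times n$ permutation matrix such that $MQ_F$ has as columns $f_1,\dots,f_s,g_1,\dots,g_{n-s}$ of $M$ in that order. For an $m\times n$ ACI-matrix $M$, $F$ is a factor set of $M$ if there is a nonsingular constant $m\times m$ matrix $R$ with $RMQ_F=\begin{bmatrix} A & B\\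 0 & C\end{bmatrix}$, where $A$ has $\#F$ columns, the zero block is Big, $A$ is FRmR and $C$ is FCmR; $F$ is a semifactor set if the same holds with the zero block Medium. *)

(* Defs.v *)
From mathcomp Require Import all_boot all_order all_algebra.
Set Implicit Arguments. Unset Strict Implicit. Unset Printing Implicit Defensive.
Import GRing.Theory.
Local Open Scope ring_scope.

(* An ACI-matrix of size m x n over F in the indeterminates x_0..x_(k-1):
   entry (i,j) is the affine polynomial
      acst i j + \sum_l (acoef l) i j * x_l
   (exactly the polynomials of degree at most one). *)
Record aciMx (F : fieldType) (k m n : nat) := AciMx {
  acst : 'M[F]_(m, n);
  acoef : 'I_k -> 'M[F]_(m, n) }.

Section ACI.
Variable F : fieldType.
Variable k : nat.

Definition is_aci m n (M : aciMx F k m n) : Prop :=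
  forall (l : 'I_k) (i1 i2 : 'I_m) (j1 j2 : 'I_n),
    acoef M l i1 j1 != 0 -> acoef M l i2 j2 != 0 -> j1 = j2.

Definition completion m n (M : aciMx F k m n) (v : 'I_k -> F) : 'M[F]_(m, n) :=
  acst M + \sum_(l < k) v l *: acoef M l.

Definition is_maxRank m n (M : aciMx F k m n) (r : nat) : Prop :=
  (exists v, \rank (completion M v) = r) /\
  (forall v, (\rank (completion M v) <= r)%N).

Definition FRmR m n (M : aciMx F k m n) : Prop := n = 0%N \/ is_maxRank M m.
Definition FCmR m n (M : aciMx F k m n) : Prop := m = 0%N \/ is_maxRank M n.

Definition aci_lmul m m' n (R : 'M[F]_(m', m)) (M : aciMx F k m n)
  : aciMx F k m' n := AciMx (R *m acst M) (fun l => R *m acoef M l).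
Definition aci_rmul m n n' (M : aciMx F k m n) (Q : 'M[F]_(n, n'))
  : aciMx F k m n' := AciMx (acst M *m Q) (fun l => acoef M l *m Q).
Definition aci_cast m n m' n' (e : (m = m') * (n = n')) (M : aciMx F k m n)
  : aciMx F k m' n' := AciMx (castmx e (acst M)) (fun l => castmx e (acoef M l)).

Definition aci_ul m1 m2 n1 n2 (M : aciMx F k (m1 + m2) (n1 + n2)) :=
  AciMx (ulsubmx (acst M)) (fun l => ulsubmx (acoef M l)).
Definition aci_dl m1 m2 n1 n2 (M : aciMx F k (m1 + m2) (n1 + n2)) :=
  AciMx (dlsubmx (acst M)) (fun l => dlsubmx (acoef M l)).
Definition aci_dr m1 m2 n1 n2 (M : aciMx F k (m1 + m2) (n1 + n2)) :=
  AciMx (drsubmx (acst M)) (fun l => drsubmx (acoef M l)).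

Definition aci_zero m n (M : aciMx F k m n) : Prop :=
  acst M = 0 /\ forall l, acoef M l = 0.

End ACI.

(* Q_S: column j of M Q_S is column (colperm S j) of M, where the columns
   f_1<...<f_s of S come first, followed by the complement g_1<...<g_{n-s}. *)
Definition colperm n (S : {set 'I_n}) (j : 'I_n) : 'I_n :=
  nth j (enum S ++ enum (~: S)) j.

Definition Qmx (F : fieldType) n (S : {set 'I_n}) : 'M[F]_n :=
  \matrix_(i, j) (i == colperm S j)%:R.

Lemma card_split n (S : {set 'I_n}) : n = (#|S| + (n - #|S|))%N.
Proof. by rewrite subnKC //; apply: leq_trans (max_card _) _; rewrite card_ord. Qed.

(* [medium = false]: factor set (Big zero block);
   [medium = true] : semifactor set (Medium zero block).
   R M Q_S = [A B; 0 C] with A of size p x #|S| and zero block of size q x #|S|. *)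
Definition factor_like (medium : bool) (F : fieldType) k m n
    (M : aciMx F k m n) (S : {set 'I_n}) : Prop :=
  exists R : 'M[F]_m, R \in unitmx /\
  exists (p q : nat) (e : (p + q)%N = m),
    let N := aci_cast (esym e, card_split S)
               (aci_rmul (aci_lmul R M) (Qmx F S)) in
    [/\ aci_zero (aci_dl N),
        (if medium then (q + #|S|)%N == maxn m n else (maxn m n < q + #|S|)%N),
        FRmR (aci_ul N) & FCmR (aci_dr N)].

Definition factor_set F k m n (M : aciMx F k m n) S := factor_like false M S.
Definition semifactor_set F k m n (M : aciMx F k m n) S := factor_like true M S.

(* Main.v *)
Require Import Defs.
From mathcomp Require Import all_boot all_order all_algebra zify perm.
Set Implicit Arguments. Unset Strict Implicit. Unset Printing Implicit Defensive.
Import GRing.Theory.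
Local Open Scope ring_scope.

Section Colperm.
Variable n : nat.
Implicit Types S : {set 'I_n}.

Lemma size_cp S : size (enum S ++ enum (~: S)) = n.
Proof. by rewrite size_cat -!cardE cardsC card_ord. Qed.

Lemma uniq_cp S : uniq (enum S ++ enum (~: S)).
Proof.
rewrite cat_uniq !enum_uniq andbT /=; apply/hasPn => x.
by rewrite !mem_enum inE => ->.
Qed.

Lemma colperm_in S (j : 'I_n) : (j < #|S|)%N -> colperm S j \in S.
Proof.
move=> hj; rewrite /colperm nth_cat -cardE hj.
by rewrite -mem_enum mem_nth // -cardE.
Qed.

Lemma colperm_out S (j : 'I_n) : (#|S| <= j)%N -> colperm S j \notin S.
Proof.
move=> hj; rewrite /colperm nth_cat -cardE ltnNge hj /=.
have : nth j (enum (~: S)) (j - #|S|) \in enum (~: S).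
  apply: mem_nth; rewrite -cardE.
  have := cardsC S; rewrite card_ord => hc.
  have := ltn_ord j; move: hc hj; move: (#|S|) (#|~: S|) (nat_of_ord j) => a b c; lia.
by rewrite mem_enum inE.
Qed.

Lemma colperm_inj S : injective (colperm S).
Proof.
move=> j1 j2; rewrite /colperm (set_nth_default j1 j2); last by rewrite size_cp.
move/eqP; rewrite nth_uniq ?size_cp ?uniq_cp //.
by move/eqP/val_inj.
Qed.

Lemma colperm_surj S (c : 'I_n) : c \in S ->
  exists j : 'I_n, (j < #|S|)%N /\ colperm S j = c.
Proof.
move=> cS.
have hi : (index c (enum S) < n)%N.
  apply: (leq_trans (n := #|S|)); first by rewrite cardE index_mem mem_enum.
  by apply: leq_trans (max_card _) _; rewrite card_ord.
exists (Ordinal hi); split => /=; first by rewrite cardE index_mem mem_enum.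
by rewrite /colperm nth_cat index_mem mem_enum cS nth_index // mem_enum.
Qed.

Definition cpp S : 'S_n := perm (@colperm_inj S).

Lemma Qmx_tr (F : fieldType) S : Qmx F S = (perm_mx (cpp S))^T.
Proof.
by apply/matrixP => i j; rewrite !mxE permE eq_sym.
Qed.

Lemma Qmx_unit (F : fieldType) S : Qmx F S \in unitmx.
Proof. by rewrite Qmx_tr unitmx_tr unitmx_perm. Qed.

Lemma mulQE (F : fieldType) m S (X : 'M[F]_(m, n)) i j :
  (X *m Qmx F S) i j = X i (colperm S j).
Proof.
rewrite mxE (bigD1 (colperm S j)) //= mxE eqxx mulr1 big1 ?addr0 // => i' hi.
by rewrite mxE (negbTE hi) mulr0.
Qed.
End Colperm.

Lemma rank_cast (F : fieldType) m1 n1 m2 n2 (e : (m1 = m2) * (n1 = n2)) (A : 'M[F]_(m1, n1)) :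
  \rank (castmx e A) = \rank A.
Proof. by case: e => e1 e2; case: m2 / e1; case: n2 / e2; rewrite castmx_id. Qed.

Lemma rank_col_le (F : fieldType) m1 m2 n (A : 'M[F]_(m1, n)) (B : 'M[F]_(m2, n)) :
  (\rank (col_mx A B) <= \rank A + \rank B)%N.
Proof. by rewrite -addsmxE; exact: mxrank_adds_leqif. Qed.

Lemma rank_row_le (F : fieldType) m n1 n2 (A : 'M[F]_(m, n1)) (B : 'M[F]_(m, n2)) :
  (\rank (row_mx A B) <= \rank A + \rank B)%N.
Proof. by rewrite -mxrank_tr tr_row_mx -(mxrank_tr A) -(mxrank_tr B) rank_col_le. Qed.

Lemma rank_block_lb (F : fieldType) p1 p2 s t (A : 'M[F]_(p1, s)) B (C : 'M[F]_(p2, t)) :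
  row_free A -> (p1 + \rank C <= \rank (block_mx A B 0 C))%N.
Proof.
case/row_freeP => X hX.
have := mxrankM_maxl (block_mx A B 0 C) (block_mx X (- (X *m B)) 0 1%:M).
rewrite mulmx_block !mulmx0 !mul0mx !addr0 !add0r mulmx1 hX mulmxN mulmxA hX mul1mx.
by rewrite addNr mulmx1 rank_diag_block_mx mxrank1.
Qed.

Lemma rank_block_ub1 (F : fieldType) p1 p2 s t (A : 'M[F]_(p1, s)) B (C : 'M[F]_(p2, t)) :
  (\rank (block_mx A B 0 C) <= p1 + \rank C)%N.
Proof.
rewrite block_mxEv; apply: leq_trans (rank_col_le _ _) _.
by rewrite rank_row_0mx leq_add2r rank_leq_row.
Qed.

Lemma rank_block_ub2 (F : fieldType) p1 p2 s t (A : 'M[F]_(p1, s)) B (C : 'M[F]_(p2, t)) :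
  (\rank (block_mx A B 0 C) <= \rank A + t)%N.
Proof.
rewrite block_mxEh; apply: leq_trans (rank_row_le _ _) _.
by rewrite rank_col_mx0 leq_add2l rank_leq_col.
Qed.

Section Main.
Variables (F : fieldType) (k m n : nat) (M : aciMx F k m n).

Lemma completionE m' n' (N : aciMx F k m' n') v i j :
  completion N v i j = acst N i j + \sum_(l < k) v l * acoef N l i j.
Proof. by rewrite /completion !mxE summxE; congr (_ + _); apply: eq_bigr => l _; rewrite mxE. Qed.

Definition coefx (l : 'I_k.+1) : 'M[F]_(m, n) :=
  if unlift ord0 l is Some l' then acoef M l' else acst M.

Definition G (c : 'I_n) : 'M[F]_(k.+1, m) := \matrix_(l, i) coefx l i c.
Definition V (S : {set 'I_n}) : 'M[F]_m := (\sum_(c in S) <<G c>>)%MS.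
Definition rho (S : {set 'I_n}) := \rank (V S).

Lemma colv_sub v c : ((col c (completion M v))^T <= G c)%MS.
Proof.
apply/submxP; exists (\row_(l < k.+1) if unlift ord0 l is Some l' then v l' else 1).
apply/rowP => i; rewrite !mxE summxE big_ord_recl !mxE /coefx unlift_none mul1r.
congr (_ + _); apply: eq_bigr => l _; rewrite !mxE /coefx liftK.
by []. Qed.

Lemma G_sub (S : {set 'I_n}) c : c \in S -> (G c <= V S)%MS.
Proof. by move=> cS; apply: (sumsmx_sup c) => //; rewrite genmxE. Qed.

Lemma rho_submod (S T : {set 'I_n}) : (rho (S :|: T) + rho (S :&: T) <= rho S + rho T)%N.
Proof.
rewrite /rho -(mxrank_sum_cap (V S) (V T)) leq_add //; apply: mxrankS.
  rewrite {1}/V; apply/sumsmx_subP => c; rewrite genmxE in_setU => /orP [] h.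
    by apply: submx_trans (addsmxSl _ _); apply: G_sub.
  by apply: submx_trans (addsmxSr _ _); apply: G_sub.
rewrite {1}/V; apply/sumsmx_subP => c; rewrite genmxE in_setI => /andP [h1 h2].
by rewrite sub_capmx !G_sub.
Qed.

Lemma card_le (S : {set 'I_n}) : (#|S| <= n)%N.
Proof. by apply: leq_trans (max_card _) _; rewrite card_ord. Qed.

Lemma L1 v (S : {set 'I_n}) : (\rank (completion M v) <= rho S + (n - #|S|))%N.
Proof.
set Mv := completion M v.
set P := castmx (erefl m, card_split S) (Mv *m Qmx F S).
have -> : \rank Mv = \rank P.
  by rewrite rank_cast mxrankMfree // row_free_unit Qmx_unit.
rewrite -(hsubmxK P); apply: leq_trans (rank_row_le _ _) _.
apply: leq_add; last exact: rank_leq_col.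
rewrite -mxrank_tr /rho; apply: mxrankS; apply/row_subP => j.
set c := colperm S (cast_ord (esym (card_split S)) (lshift _ j)).
have cS : c \in S by apply: colperm_in => /=; exact: ltn_ord.
apply: submx_trans (G_sub cS); apply: submx_trans (colv_sub v c).
suff -> : row j (lsubmx P)^T = (col c Mv)^T by rewrite submx_refl.
by apply/rowP => i; rewrite !mxE castmxE mulQE !mxE cast_ord_id.
Qed.
End Main.

Section Gen.
Variables (F : fieldType) (k : nat).

Lemma comp_lmul m m' n (R : 'M[F]_(m', m)) (N : aciMx F k m n) v :
  completion (aci_lmul R N) v = R *m completion N v.
Proof.
rewrite /completion /= mulmxDr mulmx_sumr; congr (_ + _).
by apply: eq_bigr => l _; rewrite scalemxAr.
Qed.

Lemma comp_rmul m n n' (N : aciMx F k m n) (Q : 'M[F]_(n, n')) v :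
  completion (aci_rmul N Q) v = completion N v *m Q.
Proof.
rewrite /completion /= mulmxDl mulmx_suml; congr (_ + _).
by apply: eq_bigr => l _; rewrite scalemxAl.
Qed.

Lemma comp_cast m n m' n' (e : (m = m') * (n = n')) (N : aciMx F k m n) v :
  completion (aci_cast e N) v = castmx e (completion N v).
Proof.
case: e => e1 e2; case: m' / e1; case: n' / e2.
by rewrite /completion /= !castmx_id.
Qed.

Lemma comp_ul m1 m2 n1 n2 (N : aciMx F k (m1 + m2) (n1 + n2)) v :
  completion (aci_ul N) v = ulsubmx (completion N v).
Proof.
apply/matrixP => i j; rewrite completionE [RHS]mxE [RHS]mxE completionE /= !mxE; congr (_ + _).
by apply: eq_bigr => l _; rewrite !mxE.
Qed.

Lemma comp_dl m1 m2 n1 n2 (N : aciMx F k (m1 + m2) (n1 + n2)) v :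
  completion (aci_dl N) v = dlsubmx (completion N v).
Proof.
apply/matrixP => i j; rewrite completionE [RHS]mxE [RHS]mxE completionE /= !mxE; congr (_ + _).
by apply: eq_bigr => l _; rewrite !mxE.
Qed.

Lemma comp_dr m1 m2 n1 n2 (N : aciMx F k (m1 + m2) (n1 + n2)) v :
  completion (aci_dr N) v = drsubmx (completion N v).
Proof.
apply/matrixP => i j; rewrite completionE [RHS]mxE [RHS]mxE completionE /= !mxE; congr (_ + _).
by apply: eq_bigr => l _; rewrite !mxE.
Qed.

Lemma comp_zero m n (N : aciMx F k m n) v : aci_zero N -> completion N v = 0.
Proof.
case=> h1 h2; rewrite /completion h1 add0r big1 // => l _.
by rewrite h2 scaler0.
Qed.

Lemma rank_lunit m n (R : 'M[F]_m) (X : 'M[F]_(m, n)) :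
  R \in unitmx -> \rank (R *m X) = \rank X.
Proof.
move=> Ru; rewrite -mxrank_tr trmx_mul mxrankMfree ?mxrank_tr //.
by rewrite row_free_unit unitmx_tr.
Qed.
End Gen.

Lemma ulE (T : Type) m1 m2 n1 n2 (A : 'M[T]_(m1 + m2, n1 + n2)) i j :
  ulsubmx A i j = A (lshift m2 i) (lshift n2 j).
Proof. by rewrite !mxE. Qed.
Lemma drE (T : Type) m1 m2 n1 n2 (A : 'M[T]_(m1 + m2, n1 + n2)) i j :
  drsubmx A i j = A (rshift m1 i) (rshift n1 j).
Proof. by rewrite !mxE. Qed.
Lemma dlE (T : Type) m1 m2 n1 n2 (A : 'M[T]_(m1 + m2, n1 + n2)) i j :
  dlsubmx A i j = A (rshift m1 i) (lshift n2 j).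
Proof. by rewrite !mxE. Qed.
Lemma mulE (F : fieldType) m n p (A : 'M[F]_(m, n)) (B : 'M[F]_(n, p)) i j :
  (A *m B) i j = \sum_l A i l * B l j.
Proof. by rewrite mxE. Qed.

Section Main2.
Variables (F : fieldType) (k m n : nat) (M : aciMx F k m n).

Definition Nof (R : 'M[F]_m) p q (e : (p + q)%N = m) (S : {set 'I_n}) :=
  aci_cast (esym e, card_split S) (aci_rmul (aci_lmul R M) (Qmx F S)).

Lemma compN R p q (e : (p + q)%N = m) S v :
  completion (Nof R e S) v =
  castmx (esym e, card_split S) (R *m completion M v *m Qmx F S).
Proof. by rewrite /Nof comp_cast comp_rmul comp_lmul. Qed.

Lemma rankN R p q (e : (p + q)%N = m) S v : R \in unitmx ->
  \rank (completion (Nof R e S) v) = \rank (completion M v).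
Proof.
move=> Ru; rewrite compN rank_cast mxrankMfree ?row_free_unit ?Qmx_unit //.
exact: rank_lunit.
Qed.

Lemma compN_entry R p q (e : (p + q)%N = m) S v i j :
  completion (Nof R e S) v i j =
  (R *m completion M v) (cast_ord (esym (esym e)) i)
     (colperm S (cast_ord (esym (card_split S)) j)).
Proof. by rewrite compN castmxE mulQE. Qed.

Lemma Nof_coefx R p q (e : (p + q)%N = m) S (l : 'I_k.+1) i j :
  (if unlift ord0 l is Some l' then acoef (Nof R e S) l' else acst (Nof R e S)) i j
  = (R *m coefx M l) (cast_ord (esym (esym e)) i)
     (colperm S (cast_ord (esym (card_split S)) j)).
Proof. by rewrite /coefx; case: (unlift ord0 l) => [l'|] /=; rewrite castmxE mulQE. Qed.

Definition Zp (R : 'M[F]_m) p (S : {set 'I_n}) := forall l (r : 'I_m) c,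
  (p <= r)%N -> c \in S -> (R *m coefx M l) r c = 0.

Lemma zero_to_Z R p q (e : (p + q)%N = m) S :
  aci_zero (aci_dl (Nof R e S)) -> Zp R p S.
Proof.
move=> [h1 h2] l r c pr cS.
have [j [hj hjc]] := colperm_surj cS.
have hi : (r - p < q)%N by have := ltn_ord r; lia.
pose i : 'I_q := Ordinal hi.
pose j' : 'I_#|S| := Ordinal hj.
have := Nof_coefx R e (S:=S) l (rshift p i) (lshift _ j').
have -> : cast_ord (esym (esym e)) (rshift p i) = r by apply: val_inj => /=; lia.
have -> : cast_ord (esym (card_split S)) (lshift _ j') = j by apply: val_inj.
rewrite hjc => <-.
case: (unlift ord0 l) => [l'|].
  by have := h2 l' => /matrixP /(_ i j'); rewrite dlE mxE.
by have := h1 => /matrixP /(_ i j'); rewrite dlE mxE.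
Qed.

Lemma Z_to_zero R p q (e : (p + q)%N = m) S :
  Zp R p S -> aci_zero (aci_dl (Nof R e S)).
Proof.
move=> hZ; split.
  apply/matrixP => i j; rewrite dlE [RHS]mxE.
  have := Nof_coefx R e (S:=S) ord0 (rshift p i) (lshift _ j); rewrite unlift_none => ->.
  by apply: hZ; [rewrite /= leq_addr | apply: colperm_in => /=].
move=> l; apply/matrixP => i j; rewrite dlE [RHS]mxE.
have := Nof_coefx R e (S:=S) (lift ord0 l) (rshift p i) (lshift _ j); rewrite liftK /= => ->.
by apply: hZ; [rewrite /= leq_addr | apply: colperm_in => /=].
Qed.

Lemma Z_rho R p q (e : (p + q)%N = m) S :
  R \in unitmx -> Zp R p S -> (rho M S <= p)%N.
Proof.
move=> Ru hZ.
pose R' := castmx (esym e, erefl m) R.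
pose K := dsubmx R'.
have rK : (q <= \rank K)%N.
  have h : \rank R' = m by rewrite rank_cast mxrank_unit.
  have := rank_col_le (usubmx R') (dsubmx R'); rewrite vsubmxK h.
  have := rank_leq_row (usubmx R'); rewrite -/K; lia.
have sub : (V M S <= kermx K^T)%MS.
  rewrite /V; apply/sumsmx_subP => c cS; rewrite genmxE; apply/sub_kermxP.
  apply/matrixP => l i; rewrite mulE [RHS]mxE.
  transitivity ((R *m coefx M l) (cast_ord (esym (esym e)) (rshift p i)) c); last first.
    by apply: hZ => //; rewrite /= leq_addr.
  rewrite mulE; apply: eq_bigr => j _.
  by rewrite !mxE castmxE cast_ord_id mulrC.
rewrite /rho; apply: leq_trans (mxrankS sub) _; rewrite mxrank_ker mxrank_tr; lia.
Qed.

Lemma L2 b (S : {set 'I_n}) : is_aci M -> (0 < #|S|)%N -> factor_like b M S ->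
  exists v p q, [/\ \rank (completion M v) = (p + (n - #|S|))%N, (rho M S <= p)%N,
     (p + q)%N = m &
     (if b then (q + #|S|)%N == maxn m n else (maxn m n < q + #|S|)%N)].
Proof.
move=> aci S0 [R [Ru [p [q [e /= [hz hsz hA hC]]]]]].
change (aci_zero (aci_dl (Nof R e S))) in hz.
change (FRmR (aci_ul (Nof R e S))) in hA.
change (FCmR (aci_dr (Nof R e S))) in hC.
have [v1 hv1] : exists v1, \rank (completion (aci_ul (Nof R e S)) v1) = p.
  by case: hA => [h|[[v1 h] _]]; [rewrite h in S0 | exists v1].
have [v2 hv2] : exists v2, q = 0%N \/
    \rank (completion (aci_dr (Nof R e S)) v2) = (n - #|S|)%N.
  by case: hC => [h|[[v2 h] _]]; [exists v1; left | exists v2; right].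
pose v := fun l => if [exists i, exists j, (j \in S) && (acoef M l i j != 0)]
                   then v1 l else v2 l.
have colS : forall c i, c \in S -> completion M v i c = completion M v1 i c.
  move=> c i cS; rewrite !completionE; congr (_ + _); apply: eq_bigr => l _.
  have [->|nz] := eqVneq (acoef M l i c) 0; first by rewrite !mulr0.
  rewrite /v; case: ifP => // /negbT /existsPn /(_ i) /existsPn /(_ c).
  by rewrite cS nz.
have colN : forall c i, c \notin S -> completion M v i c = completion M v2 i c.
  move=> c i cN; rewrite !completionE; congr (_ + _); apply: eq_bigr => l _.
  have [->|nz] := eqVneq (acoef M l i c) 0; first by rewrite !mulr0.
  rewrite /v; case: ifP => //; case/existsP => i' /existsP [j' /andP [j'S nz']].
  have ej := aci l i' i j' c nz' nz.
  by rewrite -ej j'S in cN.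
pose Nv := completion (Nof R e S) v.
have hul : ulsubmx Nv = completion (aci_ul (Nof R e S)) v1.
  rewrite comp_ul; apply/matrixP => i j; rewrite !ulE !compN_entry !mulE.
  apply: eq_bigr => i' _; rewrite colS //; apply: colperm_in => /=; exact: ltn_ord.
have hdr : drsubmx Nv = completion (aci_dr (Nof R e S)) v2.
  rewrite comp_dr; apply/matrixP => i j; rewrite !drE !compN_entry !mulE.
  apply: eq_bigr => i' _; rewrite colN //; apply: colperm_out => /=; exact: leq_addr.
have hdl : dlsubmx Nv = 0 by rewrite -comp_dl comp_zero.
have blk : Nv = block_mx (ulsubmx Nv) (ursubmx Nv) 0 (drsubmx Nv).
  by rewrite -hdl submxK.
have rN : \rank Nv = \rank (completion M v) by rewrite rankN.
have lb : (p + \rank (drsubmx Nv) <= \rank Nv)%N.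
  rewrite {2}blk; apply: rank_block_lb; by rewrite /row_free hul hv1.
have ub := L1 M v S.
have hrho := Z_rho e Ru (zero_to_Z hz).
have cS := card_le S.
exists v, p, q; split => //.
case: hv2 => [q0|h2].
  have : (n <= #|S|)%N.
    move: hsz; rewrite q0 add0n; case: b => [/eqP ->|/ltnW h]; first exact: leq_maxr.
    by apply: leq_trans h; exact: leq_maxr.
  rewrite rN in lb; move: lb ub hrho cS; move: (\rank _) (\rank _) (rho M S) => a1 a2 a3; move: #|S| => a4; lia.
rewrite hdr h2 rN in lb; move: lb ub hrho cS; move: (\rank _) (rho M S) => a1 a3; move: #|S| => a4; lia.
Qed.

Lemma L3 b (S : {set 'I_n}) v :
  \rank (completion M v) = (rho M S + (n - #|S|))%N ->
  (if b then ((m - rho M S) + #|S|)%N == maxn m n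
   else (maxn m n < (m - rho M S) + #|S|)%N) ->
  factor_like b M S.
Proof.
move=> hr hsz.
pose A := (V M S)^T.
pose R := invmx (col_ebase A).
have Ru : R \in unitmx by rewrite unitmx_inv col_ebase_unit.
have rA : \rank A = rho M S by rewrite mxrank_tr.
have hZ : Zp R (rho M S) S.
  move=> l r c pr cS.
  have : ((col c (coefx M l))^T <= V M S)%MS.
    apply: submx_trans (G_sub M cS).
    suff -> : (col c (coefx M l))^T = row l (G M c) by rewrite row_sub.
    by apply/rowP => i; rewrite !mxE.
  case/submxP => D hD.
  have hc : col c (coefx M l) = A *m D^T by rewrite -[col c _]trmxK hD trmx_mul.
  have -> : (R *m coefx M l) r c = (R *m col c (coefx M l)) r 0.
    by rewrite !mulE; apply: eq_bigr => i _; rewrite !mxE.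
  rewrite hc /R -{2}(mulmx_ebase A) !mulmxA mulVmx ?col_ebase_unit // mul1mx.
  rewrite -!mulmxA mulE big1 // => i _.
  by rewrite mxE rA ltnNge pr andbF mul0r.
have e : (rho M S + (m - rho M S))%N = m by rewrite subnKC // rank_leq_row.
have hz : aci_zero (aci_dl (Nof R e S)) by apply: Z_to_zero.
pose Nv := completion (Nof R e S) v.
have hdl : dlsubmx Nv = 0 by rewrite -comp_dl comp_zero.
have blk : Nv = block_mx (ulsubmx Nv) (ursubmx Nv) 0 (drsubmx Nv).
  by rewrite -hdl submxK.
have rN : \rank Nv = \rank (completion M v) by rewrite rankN.
have ub1 := rank_block_ub1 (ulsubmx Nv) (ursubmx Nv) (drsubmx Nv).
have ub2 := rank_block_ub2 (ulsubmx Nv) (ursubmx Nv) (drsubmx Nv).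
rewrite -blk rN hr in ub1 ub2.
have r1 := rank_leq_row (ulsubmx Nv).
have r2 := rank_leq_col (drsubmx Nv).
exists R; split => //; exists (rho M S), (m - rho M S)%N, e.
split => //.
  right; split; last by move=> v'; exact: rank_leq_row.
  by exists v; rewrite comp_ul -/Nv; apply/eqP; rewrite eqn_leq r1 -(leq_add2r (n - #|S|)) ub2.
right; split; last by move=> v'; exact: rank_leq_col.
by exists v; rewrite comp_dr -/Nv; apply/eqP; rewrite eqn_leq r2 -(leq_add2l (rho M S)) ub1.
Qed.
End Main2.

Lemma arith (r1 r2 p1 q1 p2 t1 t2 tI tU s1 s2 sI sU m n : nat) :
  r1 = (p1 + (n - s1))%N -> (t1 <= p1)%N -> (p1 + q1)%N = m ->
  r2 = (p2 + (n - s2))%N -> (t2 <= p2)%N ->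
  (r1 <= t1 + (n - s1))%N -> (r2 <= t2 + (n - s2))%N ->
  (r1 <= t2 + (n - s2))%N -> (r2 <= t1 + (n - s1))%N ->
  (r1 <= tI + (n - sI))%N -> (r1 <= tU + (n - sU))%N ->
  (tU + tI <= t1 + t2)%N -> (sU + sI)%N = (s1 + s2)%N ->
  (s1 <= n)%N -> (s2 <= n)%N -> (sI <= n)%N -> (sU <= n)%N ->
  (tI <= m)%N -> (tU <= m)%N ->
  [/\ r1 = (tI + (n - sI))%N, r1 = (tU + (n - sU))%N,
      ((m - tI) + sI)%N = (q1 + s1)%N & ((m - tU) + sU)%N = (q1 + s1)%N].
Proof. by move=> *; split; lia. Qed.

Lemma core (F : fieldType) (k m n : nat) (M : aciMx F k m n) (F1 F2 : {set 'I_n}) b :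
  is_aci M -> F1 :&: F2 != set0 ->
  factor_like b M F1 -> factor_like b M F2 ->
  factor_like b M (F1 :&: F2) /\ factor_like b M (F1 :|: F2).
Proof.
move=> aci ne h1 h2.
have pI : (0 < #|F1 :&: F2|)%N by rewrite card_gt0.
have pos1 : (0 < #|F1|)%N.
  by apply: leq_trans pI (subset_leq_card (subsetIl _ _)).
have pos2 : (0 < #|F2|)%N.
  by apply: leq_trans pI (subset_leq_card (subsetIr _ _)).
have [v1 [p1 [q1 [hr1 hp1 e1 hs1]]]] := L2 aci pos1 h1.
have [v2 [p2 [q2 [hr2 hp2 e2 hs2]]]] := L2 aci pos2 h2.
have [eI eU sI sU] := arith hr1 hp1 e1 hr2 hp2 (L1 M v1 F1) (L1 M v2 F2)
  (L1 M v1 F2) (L1 M v2 F1) (L1 M v1 (F1 :&: F2)) (L1 M v1 (F1 :|: F2))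
  (rho_submod M F1 F2) (cardsUI F1 F2) (card_le F1) (card_le F2)
  (card_le (F1 :&: F2)) (card_le (F1 :|: F2)) (rank_leq_row _) (rank_leq_row _).
split; apply: (L3 (v := v1)) => //; by rewrite ?sI ?sU.
Qed.

Theorem theorem5p5 (F : fieldType) (k m n : nat) (M : aciMx F k m n)
    (F1 F2 : {set 'I_n}) :
  is_aci M -> F1 :&: F2 != set0 ->
  (factor_set M F1 -> factor_set M F2 ->
     factor_set M (F1 :&: F2) /\ factor_set M (F1 :|: F2)) /\
  (semifactor_set M F1 -> semifactor_set M F2 ->
     semifactor_set M (F1 :&: F2) /\ semifactor_set M (F1 :|: F2)).
Proof. by move=> aci ne; split; apply: core. Qed.
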